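(* Let $\tau\in\mathscr C^r(\mathbb{S}^1,\mathbb{R})$ and $R>\|\tau'\|_\infty$. For all integers $n,m\ge1$, $\mathcal N(\tau,R;n+m)\le\mathcal N(\tau,R'_m;n)\cdot\mathcal N(\tau,R;m)\le\mathcal N(\tau,R;n)\cdot\mathcal N(\tau,R;m)$, where $R'_m=\|\tau'\|_\infty+\lambda^{-m}(R-\|\tau'\|_\infty)$. Consequently $\lim_{n\to\infty}\mathcal N(\tau,R;n)^{1/n}$ exists, equals $\inf_n\mathcal N(\tau,R;n)^{1/n}$, and is independent of the choice of $R>\|\tau'\|_\infty$.
   Context: Let $\mathbb{S}^1=\mathbb{R}/\mathbb{Z}$, $\mathbb{T}^2=\mathbb{S}^1\times\mathbb{S}^1$, $r\ge2$. Let $E:\mathbb{S}^1\to\mathbb{S}^1$ be a $\mathscr C^r$ expanding map of degree $\ell\ge2$ with $1<\lambda\le E'(x)\le\Lambda$ for all $x$. For $\tau\in\mathscr C^r(\mathbb{S}^1,\mathbb{R})$ let $f(x,s)=(E(x),s+\tau(x)\bmod1)$ on $\mathbb{T}^2$. For $R>0$ set $\vartheta_R=R/(\lambda-1)$ and $\mathscr K_R=\{(\xi,\eta)\in\mathbb{R}^2:|\eta|\le\vartheta_R|\xi|\}$. For $R>\|\tau'\|_\infty$ and $n\ge1$, $\mathcal N(\tau,R;n)=\sup_{z\in\mathbb{T}^2}\sup_{v}\#\{\zeta\in f^{-n}(z): v\in Df^n(\zeta)\mathscr K_R\}$, $\sup_v$ over unit vectors $v\in\mathbb{R}^2$. *)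

(* Defs.v *)
From Stdlib Require Import Reals Lra Lia List ClassicalEpsilon.
Import ListNotations.
Open Scope R_scope.

Definition Cr (r : nat) (f : R -> R) : Prop :=
  exists d : nat -> R -> R,
    d O = f /\
    (forall k x, (k < r)%nat -> derivable_pt_lim (d k) x (d (S k) x)) /\
    (forall x, continuity_pt (d r) x).

Definition is_int (a : R) : Prop := exists k : Z, a = IZR k.

(* Lift of the skew product f(x,s) = (E x, s + tau x) to R^2. *)
Definition skew (E tau : R -> R) (p : R * R) : R * R :=
  (E (fst p), snd p + tau (fst p)).

Fixpoint skew_iter (E tau : R -> R) (n : nat) (p : R * R) : R * R :=
  match n with
  | O => p
  | S k => skew E tau (skew_iter E tau k p)
  end.

Record mat2 := Mat2 { m11 : R; m12 : R; m21 : R; m22 : R }.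

Definition mat_mul (A B : mat2) : mat2 :=
  Mat2 (m11 A * m11 B + m12 A * m21 B) (m11 A * m12 B + m12 A * m22 B)
       (m21 A * m11 B + m22 A * m21 B) (m21 A * m12 B + m22 A * m22 B).

Definition mat_app (A : mat2) (w : R * R) : R * R :=
  (m11 A * fst w + m12 A * snd w, m21 A * fst w + m22 A * snd w).

Definition Dskew (dE dtau : R -> R) (p : R * R) : mat2 :=
  Mat2 (dE (fst p)) 0 (dtau (fst p)) 1.

Fixpoint Dskew_iter (E tau dE dtau : R -> R) (n : nat) (p : R * R) : mat2 :=
  match n with
  | O => Mat2 1 0 0 1
  | S k => mat_mul (Dskew dE dtau (skew_iter E tau k p))
                   (Dskew_iter E tau dE dtau k p)
  end.

Definition theta (lam Rc : R) : R := Rc / (lam - 1).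
Definition in_cone (lam Rc : R) (w : R * R) : Prop :=
  Rabs (snd w) <= theta lam Rc * Rabs (fst w).

(* zeta is (the canonical representative in [0,1)^2 of) a point of
   f^{-n}(z) on T^2 *)
Definition preimage (E tau : R -> R) (n : nat) (z zeta : R * R) : Prop :=
  0 <= fst zeta < 1 /\ 0 <= snd zeta < 1 /\
  is_int (fst (skew_iter E tau n zeta) - fst z) /\
  is_int (snd (skew_iter E tau n zeta) - snd z).

Definition good_preimage (E tau dE dtau : R -> R) (lam Rc : R) (n : nat)
  (z v zeta : R * R) : Prop :=
  preimage E tau n z zeta /\
  exists w, in_cone lam Rc w /\ mat_app (Dskew_iter E tau dE dtau n zeta) w = v.

Definition has_card (P : R * R -> Prop) (k : nat) : Prop :=
  exists l : list (R * R), NoDup l /\ (forall x, In x l <-> P x) /\ length l = k.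

Definition N_values (E tau dE dtau : R -> R) (lam Rc : R) (n : nat) (y : R) : Prop :=
  exists (z v : R * R) (k : nat),
    fst v * fst v + snd v * snd v = 1 /\
    has_card (good_preimage E tau dE dtau lam Rc n z v) k /\ y = INR k.

Definition Ncal (E tau dE dtau : R -> R) (lam Rc : R) (n : nat) : R :=
  epsilon (inhabits 0) (fun s => is_lub (N_values E tau dE dtau lam Rc n) s).

Definition is_glb (P : R -> Prop) (m : R) : Prop :=
  (forall y, P y -> m <= y) /\ (forall b, (forall y, P y -> b <= y) -> b <= m).

(* Main.v *)
Require Import Defs.
From Stdlib Require Import Reals.
From Stdlib Require Import Reals Lra Lia List ClassicalEpsilon Classical ZArith.
Open Scope R_scope.

Lemma ln_le' : forall x y, 0 < x -> x <= y -> ln x <= ln y.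
Proof. intros x y Hx Hxy. destruct (Rle_lt_or_eq_dec _ _ Hxy) as [H|H].
- left; apply ln_increasing; auto.
- subst; lra. Qed.

Section Fekete.
Variable a : nat -> R.
Variable C : R.
Hypothesis Ha1 : forall n, (1 <= n)%nat -> 1 <= a n.
Hypothesis HaC : forall n, (1 <= n)%nat -> a n <= C ^ n.
Hypothesis Hsub : forall n m, (1 <= n)%nat -> (1 <= m)%nat -> a (n + m)%nat <= a n * a m.

Definition bb n := ln (a n).
Definition cc n := bb n / INR n.

Lemma C_ge1 : 1 <= C.
Proof. pose proof (Ha1 1%nat (le_n _)). pose proof (HaC 1%nat (le_n _)). simpl in *. lra. Qed.

Lemma lnC_ge0 : 0 <= ln C.
Proof. rewrite <- ln_1. apply ln_le'; [lra| apply C_ge1]. Qed.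

Lemma bb_nonneg n : (1 <= n)%nat -> 0 <= bb n.
Proof. intros Hn. unfold bb. rewrite <- ln_1. apply ln_le'; [lra| auto]. Qed.

Lemma bb_le n : (1 <= n)%nat -> bb n <= INR n * ln C.
Proof. intros Hn. unfold bb. rewrite <- ln_pow by (pose proof C_ge1; lra).
  apply ln_le'. pose proof (Ha1 n Hn); lra. auto. Qed.

Lemma bb_sub n m : (1 <= n)%nat -> (1 <= m)%nat -> bb (n + m) <= bb n + bb m.
Proof. intros Hn Hm. unfold bb. rewrite <- ln_mult.
  apply ln_le'. pose proof (Ha1 (n+m)%nat ltac:(lia)); lra. auto.
  pose proof (Ha1 n Hn); lra. pose proof (Ha1 m Hm); lra. Qed.

Lemma bb_mult q m : (1 <= q)%nat -> (1 <= m)%nat -> bb (q * m) <= INR q * bb m.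
Proof. intros Hq Hm. induction q as [|q IH]. lia.
  destruct q as [|q]. simpl. rewrite Nat.add_0_r. lra.
  replace (S (S q) * m)%nat with (S q * m + m)%nat by lia.
  eapply Rle_trans. apply bb_sub; lia.
  rewrite (S_INR (S q)). specialize (IH ltac:(lia)). lra. Qed.

Lemma bb_qr m n : (1 <= m)%nat -> (m <= n)%nat ->
  bb n <= INR (n / m) * bb m + INR m * ln C.
Proof. intros Hm Hmn.
  pose proof (Nat.div_mod n m ltac:(lia)) as Hd.
  pose proof (Nat.mod_upper_bound n m ltac:(lia)) as Hr.
  set (q := (n / m)%nat) in *. set (r := (n mod m)%nat) in *.
  assert (Hq : (1 <= q)%nat). { destruct q. lia. lia. }
  pose proof (bb_mult q m Hq Hm) as H1.
  pose proof (bb_nonneg m Hm). pose proof lnC_ge0. pose proof (pos_INR m).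
  assert (0 <= INR m * ln C) by (apply Rmult_le_pos; auto).
  destruct r as [|r].
  - replace n with (q * m)%nat by lia. lra.
  - replace n with (q * m + S r)%nat by lia.
    eapply Rle_trans. apply bb_sub. nia. lia.
    pose proof (bb_le (S r) ltac:(lia)).
    assert (INR (S r) * ln C <= INR m * ln C).
    { apply Rmult_le_compat_r; auto. apply le_INR; lia. }
    lra.
Qed.

Lemma cc_bound m n : (1 <= m)%nat -> (m <= n)%nat ->
  cc n <= cc m + INR m * ln C / INR n.
Proof. intros Hm Hmn. unfold cc.
  pose proof (bb_qr m n Hm Hmn) as H.
  assert (Hn0 : 0 < INR n) by (apply lt_0_INR; lia).
  assert (Hm0 : 0 < INR m) by (apply lt_0_INR; lia).
  assert (Hqm : INR (n / m) * INR m <= INR n).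
  { rewrite <- mult_INR. apply le_INR. rewrite Nat.mul_comm. apply Nat.Div0.mul_div_le. }
  pose proof (bb_nonneg m Hm).
  assert (INR (n / m) * bb m <= INR n * (bb m / INR m)).
  { apply Rmult_le_reg_r with (INR m); auto.
    replace (INR n * (bb m / INR m) * INR m) with (INR n * bb m) by (field; lra).
    replace (INR (n / m) * bb m * INR m) with ((INR (n/m) * INR m) * bb m) by ring.
    apply Rmult_le_compat_r; auto. }
  apply Rmult_le_reg_r with (INR n); auto.
  replace (bb n / INR n * INR n) with (bb n) by (field; lra).
  replace ((bb m / INR m + INR m * ln C / INR n) * INR n)
    with (INR n * (bb m / INR m) + INR m * ln C) by (field; lra).
  lra.
Qed.

Lemma cc_nonneg n : (1 <= n)%nat -> 0 <= cc n.
Proof. intros Hn. unfold cc. unfold Rdiv. apply Rmult_le_pos. apply bb_nonneg; auto. left; apply Rinv_0_lt_compat.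
  apply lt_0_INR; lia. Qed.

Lemma fekete : exists L0, (forall n, (1 <= n)%nat -> L0 <= cc n) /\
   Un_cv (fun k => cc (S k)) L0.
Proof.
  set (Sset := fun y => exists n, (1 <= n)%nat /\ y = - cc n).
  assert (HB : bound Sset). { exists 0. intros y [n [Hn ->]]. pose proof (cc_nonneg n Hn). lra. }
  assert (HE : exists y, Sset y). { exists (- cc 1). exists 1%nat. split; auto. }
  destruct (completeness Sset HB HE) as [M [HM1 HM2]].
  exists (- M). split.
  - intros n Hn. assert (- cc n <= M) by (apply HM1; exists n; auto). lra.
  - intros eps Heps.
    assert (Hex : exists m, (1 <= m)%nat /\ cc m < - M + eps / 2).
    { apply NNPP. intros Hno.
      assert (M <= M - eps/2). { apply HM2. intros y [n [Hn ->]].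
        destruct (Rlt_le_dec (cc n) (-M + eps/2)) as [h|h].
        exfalso; apply Hno; exists n; auto. lra. }
      lra. }
    destruct Hex as [m [Hm Hcm]].
    pose proof lnC_ge0.
    destruct (archimed (INR m * ln C / (eps / 2))) as [Hup _].
    set (N := max m (Z.to_nat (up (INR m * ln C / (eps / 2))))).
    exists N. intros k Hk. unfold R_dist.
    assert (HmS : (m <= S k)%nat) by lia.
    pose proof (cc_bound m (S k) Hm HmS).
    assert (Hlow : - M <= cc (S k)). { assert (- cc (S k) <= M) by (apply HM1; exists (S k); split; auto; lia). lra. }
    assert (Hsk : INR m * ln C / (eps/2) < INR (S k)).
    { eapply Rlt_le_trans. apply Hup.
      destruct (Z_le_gt_dec 0%Z (up (INR m * ln C / (eps / 2)))) as [hz|hz].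
      - rewrite <- (Z2Nat.id _ hz). rewrite <- INR_IZR_INZ. apply le_INR. lia.
      - apply Rle_trans with 0. apply IZR_le; lia. apply pos_INR. }
    assert (HSk : 0 < INR (S k)) by (apply lt_0_INR; lia).
    assert (INR m * ln C / INR (S k) < eps / 2).
    { apply Rmult_lt_reg_r with (INR (S k)); auto.
      replace (INR m * ln C / INR (S k) * INR (S k)) with (INR m * ln C) by (field; lra).
      apply Rmult_lt_reg_r with (/ (eps/2)). apply Rinv_0_lt_compat; lra.
      replace (eps / 2 * INR (S k) * / (eps / 2)) with (INR (S k)) by (field; lra).
      exact Hsk. }
    rewrite Rabs_right; lra.
Qed.
End Fekete.


Lemma int_shift (g : R -> R) (c : R) : (forall x, g (x+1) = g x + c) ->
  forall j x, g (x + IZR j) = g x + IZR j * c.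
Proof. intros H j. induction j using Z.peano_ind; intros x.
- simpl. rewrite Rplus_0_r. ring.
- rewrite succ_IZR. replace (x + (IZR j + 1)) with ((x + IZR j) + 1) by ring.
  rewrite H, IHj. ring.
- rewrite <- Z.sub_1_r, minus_IZR. specialize (H (x + (IZR j - 1))).
  replace (x + (IZR j - 1) + 1) with (x + IZR j) in H by ring. rewrite IHj in H. lra.
Qed.

Lemma deriv_per (g dg : R -> R) c : (forall x, g (x+1) = g x + c) ->
  (forall x, derivable_pt_lim g x (dg x)) -> forall x, dg (x+1) = dg x.
Proof. intros Hp Hd x. apply (uniqueness_limite g x). 2: apply Hd.
  intros eps Heps. destruct (Hd (x+1) eps Heps) as [d Hdd]. exists d. intros h hn hh.
  specialize (Hdd h hn hh). replace (x + 1 + h) with ((x+h)+1) in Hdd by ring.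
  rewrite !Hp in Hdd. replace (g (x + h) + c - (g x + c)) with (g (x+h) - g x) in Hdd by ring.
  exact Hdd.
Qed.

Lemma mat_mul_assoc A B C : mat_mul (mat_mul A B) C = mat_mul A (mat_mul B C).
Proof. destruct A, B, C; unfold mat_mul; simpl; f_equal; ring. Qed.
Lemma mat_mul_id A : mat_mul (Mat2 1 0 0 1) A = A.
Proof. destruct A; unfold mat_mul; simpl; f_equal; ring. Qed.
Lemma mat_app_mul A B w : mat_app (mat_mul A B) w = mat_app A (mat_app B w).
Proof. destruct A, B, w; unfold mat_app, mat_mul; simpl; f_equal; ring. Qed.
Lemma mat_app_id w : mat_app (Mat2 1 0 0 1) w = w.
Proof. destruct w; unfold mat_app; simpl; f_equal; ring. Qed.
Lemma mat_app_scale A c w : mat_app A (c * fst w, c * snd w) =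
  (c * fst (mat_app A w), c * snd (mat_app A w)).
Proof. destruct A, w; unfold mat_app; simpl; f_equal; ring. Qed.
Lemma mat_inj a c u u' : 0 < a -> mat_app (Mat2 a 0 c 1) u = mat_app (Mat2 a 0 c 1) u' -> u = u'.
Proof. destruct u as [r r0], u' as [r1 r2]; unfold mat_app; simpl; intros Ha H.
  injection H; intros H2 H1. assert (r = r1) by (apply Rmult_eq_reg_l with a; lra).
  subst. f_equal. lra. Qed.

Definition pdec (p q : R * R) : {p = q} + {p <> q}.
Proof. decide equality; apply Req_EM_T. Defined.

Definition red (p : R * R) : R * R := (frac_part (fst p), frac_part (snd p)).
Lemma red_decomp p : exists j1 j2, p = (fst (red p) + IZR j1, snd (red p) + IZR j2).
Proof. exists (Int_part (fst p)), (Int_part (snd p)). destruct p as [x s]. unfold red; simpl.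
  rewrite (Rplus_Int_part_frac_part x) at 1. rewrite (Rplus_Int_part_frac_part s) at 1.
  f_equal; ring. Qed.
Lemma red_range p : 0 <= fst (red p) < 1 /\ 0 <= snd (red p) < 1.
Proof. unfold red; simpl. pose proof (base_fp (fst p)). pose proof (base_fp (snd p)). lra. Qed.

Lemma fiber_count {A B : Type} (decB : forall x y : B, {x=y}+{x<>y}) (g : A -> B) (K : R) :
  0 <= K -> forall Ys l, NoDup l ->
  (forall y l', incl l' l -> NoDup l' -> (forall x, In x l' -> g x = y) -> INR (length l') <= K) ->
  (forall x, In x l -> In (g x) Ys) -> INR (length l) <= INR (length Ys) * K.
Proof. intros HK Ys. induction Ys as [|y Ys IH]; intros l Hnd Hf Hin.
 - destruct l as [|x l]. simpl; lra. exfalso; apply (Hin x); left; auto.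
 - set (p := fun x => if decB (g x) y then true else false).
   rewrite <- (filter_length p l). rewrite plus_INR. simpl length. rewrite S_INR.
   assert (H1: INR (length (filter p l)) <= K).
   { apply Hf with y. intros x Hx; apply filter_In in Hx; tauto.
     apply NoDup_filter; auto.
     intros x Hx; apply filter_In in Hx; destruct Hx as [_ Hx]; unfold p in Hx;
     destruct (decB (g x) y); auto; discriminate. }
   assert (H2: INR (length (filter (fun x => negb (p x)) l)) <= INR (length Ys) * K).
   { apply IH. apply NoDup_filter; auto.
     intros y' l' Hi Hn Hg; apply Hf with y'; auto.
     intros x Hx. apply Hi in Hx. apply filter_In in Hx; tauto.
     intros x Hx; apply filter_In in Hx; destruct Hx as [Hx Hp].
     destruct (Hin x Hx) as [He|He]; auto. unfold p in Hp.
     destruct (decB (g x) y); simpl in Hp; congruence. }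
   lra.
Qed.

Lemma NoDup_map_in {A B} (f : A -> B) l : NoDup l ->
  (forall x y, In x l -> In y l -> f x = f y -> x = y) -> NoDup (map f l).
Proof. induction l as [|a l IH]; intros Hnd Hi; simpl. constructor.
  inversion Hnd; subst. constructor.
  - intro Hin. apply in_map_iff in Hin. destruct Hin as [x [Hx Hxl]].
    assert (x = a) by (apply Hi; simpl; auto). subst; contradiction.
  - apply IH; auto. intros; apply Hi; simpl; auto. Qed.

Lemma finite_of_bound (P : R * R -> Prop) (B : nat) :
  (forall l, NoDup l -> (forall x, In x l -> P x) -> (length l <= B)%nat) -> exists k, has_card P k.
Proof. intros HB.
  assert (forall d l, NoDup l -> (forall x, In x l -> P x) -> (B - length l <= d)%nat -> exists k, has_card P k).
  { induction d; intros l Hl HP Hd; destruct (classic (forall x, P x -> In x l)) as [Hc|Hc].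
    1,3: exists (length l), l; split; [auto| split; [ intro x; split; auto | reflexivity]].
    all: apply not_all_ex_not in Hc; destruct Hc as [x Hx]; apply imply_to_and in Hx;
      destruct Hx as [Px nIn].
    all: assert (Hl' : NoDup (x :: l)) by (constructor; auto).
    all: assert (HP' : forall y, In y (x :: l) -> P y) by (intros y [<-|Hy]; auto).
    - pose proof (HB _ Hl' HP'). simpl in *. lia.
    - apply (IHd (x :: l)); auto. pose proof (HB _ Hl' HP'). simpl in *. lia. }
  apply (H B nil). constructor. intros x []. simpl; lia.
Qed.

Lemma card_ge (P : R * R -> Prop) k l : has_card P k -> NoDup l -> (forall x, In x l -> P x) -> (length l <= k)%nat.
Proof. intros [l0 [Hn [Hiff Hlen]]] Hl HP. rewrite <- Hlen. apply NoDup_incl_length; auto.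
  intros x Hx. apply Hiff, HP; auto. Qed.

Lemma int_small j : -1 < IZR j < 1 -> j = 0%Z.
Proof. intros [H1 H2]. apply lt_IZR in H1. apply lt_IZR in H2. lia. Qed.
Lemma up_IZR k : up (IZR k) = (k + 1)%Z.
Proof. symmetry; apply tech_up; rewrite plus_IZR; lra. Qed.

Lemma Un_cv_ext u v l : (forall k, u k = v k) -> Un_cv u l -> Un_cv v l.
Proof. intros He H eps Heps. destruct (H eps Heps) as [N HN]. exists N. intros n Hn.
  rewrite <- He. auto. Qed.

Lemma lim_le_aux (u : nat -> R) L1 L2 K : Un_cv (fun k => u (S k)) L1 -> 0 <= K ->
  (forall n, (1 <= n)%nat -> L2 <= u n + K / INR n) -> L2 <= L1.
Proof. intros Hcv HK H. destruct (Rle_or_lt L2 L1) as [h|h]; auto. exfalso.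
  set (eps := (L2 - L1) / 2).
  destruct (Hcv eps ltac:(unfold eps; lra)) as [N HN].
  destruct (archimed (K / eps)) as [Hup _].
  set (k := max N (Z.to_nat (up (K / eps)))).
  specialize (HN k ltac:(unfold k; lia)). unfold R_dist in HN.
  pose proof (Rle_abs (u (S k) - L1)).
  assert (Hsk : K / eps < INR (S k)).
  { eapply Rlt_le_trans. apply Hup.
    destruct (Z_le_gt_dec 0%Z (up (K / eps))) as [hz|hz].
    - rewrite <- (Z2Nat.id _ hz). rewrite <- INR_IZR_INZ. apply le_INR. unfold k; lia.
    - apply Rle_trans with 0. apply IZR_le; lia. apply pos_INR. }
  assert (HSk : 0 < INR (S k)) by (apply lt_0_INR; lia).
  assert (K / INR (S k) < eps).
  { apply Rmult_lt_reg_r with (INR (S k)); auto.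
    replace (K / INR (S k) * INR (S k)) with K by (field; lra).
    apply Rmult_lt_reg_r with (/ eps). apply Rinv_0_lt_compat; unfold eps; lra.
    replace (eps * INR (S k) * / eps) with (INR (S k)) by (field; unfold eps; lra).
    exact Hsk. }
  specialize (H (S k) ltac:(lia)). unfold eps in *. lra.
Qed.


Section Geo.
Variable ell : nat.
Variable E dE : R -> R.
Variable lam : R.
Hypothesis HE_lift : forall x, E (x + 1) = E x + INR ell.
Hypothesis HdE : forall x, derivable_pt_lim E x (dE x).
Hypothesis Hlam : 1 < lam.
Hypothesis HdE_low : forall x, lam <= dE x.
Variable tau dtau : R -> R.
Hypothesis Htau_per : forall x, tau (x+1) = tau x.
Hypothesis Hdtau : forall x, derivable_pt_lim tau x (dtau x).
Variable Mtau : R.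
Hypothesis HdtauM : forall x, Rabs (dtau x) <= Mtau.
Hypothesis HM0 : 0 <= Mtau.

Local Notation sk := (skew_iter E tau).
Local Notation D := (Dskew_iter E tau dE dtau).

Lemma E_sh j x : E (x + IZR j) = E x + IZR j * INR ell.
Proof. apply int_shift; auto. Qed.
Lemma tau_sh j x : tau (x + IZR j) = tau x.
Proof. rewrite (int_shift tau 0); [ring|]. intros; rewrite Htau_per; ring. Qed.
Lemma dE_sh j x : dE (x + IZR j) = dE x.
Proof. rewrite (int_shift dE 0); [ring|]. intros. rewrite (deriv_per E dE (INR ell)); auto. ring. Qed.
Lemma dtau_sh j x : dtau (x + IZR j) = dtau x.
Proof. rewrite (int_shift dtau 0); [ring|]. intros. rewrite (deriv_per tau dtau 0); auto. ring.
  intros; rewrite Htau_per; ring. Qed.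

Lemma iter_split_s n x s : sk n (x, s) = (fst (sk n (x,0)), s + snd (sk n (x,0))).
Proof. induction n as [|n IH]; simpl. f_equal; ring.
  rewrite IH. unfold skew; simpl. f_equal; ring. Qed.

Lemma iter_shift n p j1 j2 : exists k1 k2,
  sk n (fst p + IZR j1, snd p + IZR j2) = (fst (sk n p) + IZR k1, snd (sk n p) + IZR k2).
Proof. induction n as [|n IH]. exists j1, j2. reflexivity.
  destruct IH as [k1 [k2 H]]. simpl. rewrite H. unfold skew; simpl.
  exists (k1 * Z.of_nat ell)%Z, k2. rewrite E_sh, tau_sh.
  f_equal. rewrite mult_IZR, <- INR_IZR_INZ; ring. ring. Qed.

Lemma iter_add n m p : sk (n + m) p = sk n (sk m p).
Proof. induction n; simpl; auto. rewrite IHn; auto. Qed.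

Lemma D_shift n p j1 j2 : D n (fst p + IZR j1, snd p + IZR j2) = D n p.
Proof. induction n as [|n IH]; simpl; auto. rewrite IH.
  destruct (iter_shift n p j1 j2) as [k1 [k2 ->]]. unfold Dskew; simpl.
  rewrite dE_sh, dtau_sh. reflexivity. Qed.

Lemma D_add n m p : D (n + m) p = mat_mul (D n (sk m p)) (D m p).
Proof. induction n as [|n IH]; simpl. rewrite mat_mul_id; auto.
  rewrite IH, iter_add, mat_mul_assoc. reflexivity. Qed.

Lemma D_form n p : exists a c, D n p = Mat2 a 0 c 1 /\ lam ^ n <= a.
Proof. induction n as [|n IH]. exists 1, 0. simpl; split; [reflexivity| right; reflexivity].
  destruct IH as [a [c [Ha Hl]]]. simpl. rewrite Ha. unfold mat_mul, Dskew; simpl.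
  exists (dE (fst (sk n p)) * a), (dtau (fst (sk n p)) * a + c). split. f_equal; ring.
  pose proof (HdE_low (fst (sk n p))). assert (0 <= lam ^ n) by (apply pow_le; lra).
  apply Rmult_le_compat; lra. Qed.

Lemma theta_eq Rc : theta lam (Mtau + / lam * (Rc - Mtau)) = (Mtau + theta lam Rc) / lam.
Proof. unfold theta. field. lra. Qed.

Lemma cone_step Rc p w : Mtau <= Rc -> in_cone lam Rc w ->
  in_cone lam (Mtau + / lam * (Rc - Mtau)) (mat_app (Dskew dE dtau p) w).
Proof. intros HR Hw. unfold in_cone in *. rewrite theta_eq.
  destruct w as [xi eta]. unfold mat_app, Dskew; simpl in *.
  set (th := theta lam Rc) in *.
  assert (Hth : 0 <= th) by (unfold th, theta; apply Rmult_le_pos; [lra| left; apply Rinv_0_lt_compat; lra]).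
  set (x := fst p). pose proof (HdE_low x). pose proof (HdtauM x).
  replace (dE x * xi + 0 * eta) with (dE x * xi) by ring.
  replace (dtau x * xi + 1 * eta) with (dtau x * xi + eta) by ring.
  rewrite Rabs_mult, (Rabs_right (dE x)) by lra.
  eapply Rle_trans. apply Rabs_triang. rewrite Rabs_mult.
  pose proof (Rabs_pos xi).
  assert (Rabs (dtau x) * Rabs xi <= Mtau * Rabs xi) by (apply Rmult_le_compat_r; auto).
  assert (lam * Rabs xi <= dE x * Rabs xi) by (apply Rmult_le_compat_r; auto).
  assert (0 <= (Mtau + th) / lam) by (apply Rmult_le_pos; [lra| left; apply Rinv_0_lt_compat; lra]).
  assert (HH : (Mtau + th) / lam * (lam * Rabs xi) <= (Mtau + th) / lam * (dE x * Rabs xi))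
    by (apply Rmult_le_compat_l; auto).
  replace ((Mtau + th) / lam * (lam * Rabs xi)) with (Mtau * Rabs xi + th * Rabs xi) in HH by (field; lra).
  lra.
Qed.

Lemma cone_iter m Rc p w : Mtau <= Rc -> in_cone lam Rc w ->
  in_cone lam (Mtau + / lam ^ m * (Rc - Mtau)) (mat_app (D m p) w).
Proof. revert Rc w. induction m as [|m IH]; intros Rc w HR Hw.
  - simpl. rewrite mat_app_id. replace (Mtau + / 1 * (Rc - Mtau)) with Rc by field. auto.
  - simpl. rewrite mat_app_mul.
    assert (Hp : 0 < lam ^ m) by (apply pow_lt; lra).
    replace (Mtau + / (lam * lam ^ m) * (Rc - Mtau)) with
      (Mtau + / lam * ((Mtau + / lam ^ m * (Rc - Mtau)) - Mtau)) by (field; lra).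
    apply cone_step; auto.
    assert (0 <= / lam ^ m * (Rc - Mtau)) by (apply Rmult_le_pos; [left; apply Rinv_0_lt_compat; lra| lra]).
    lra. Qed.

Lemma cone_mono Rc1 Rc2 w : Rc1 <= Rc2 -> in_cone lam Rc1 w -> in_cone lam Rc2 w.
Proof. unfold in_cone, theta. intros H Hw. eapply Rle_trans. apply Hw.
  apply Rmult_le_compat_r. apply Rabs_pos. apply Rmult_le_compat_r; auto.
  left; apply Rinv_0_lt_compat; lra. Qed.

Lemma cone_scale Rc c w : in_cone lam Rc w -> in_cone lam Rc (c * fst w, c * snd w).
Proof. unfold in_cone. simpl. intros H. rewrite !Rabs_mult.
  replace (theta lam Rc * (Rabs c * Rabs (fst w))) with (Rabs c * (theta lam Rc * Rabs (fst w))) by ring.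
  apply Rmult_le_compat_l; auto. apply Rabs_pos. Qed.

Lemma E_lt x y : x < y -> E x < E y.
Proof. intros H.
  pose (pr := (fun z => exist _ (dE z) (HdE z)) : derivable E).
  destruct (MVT_cor1 E x y pr H) as [c [Hc _]]. simpl in Hc.
  pose proof (HdE_low c). assert (0 < dE c * (y - x)) by (apply Rmult_lt_0_compat; lra). lra. Qed.

Lemma fst_mono n x y : x < y -> fst (sk n (x,0)) < fst (sk n (y,0)).
Proof. intros H. induction n; simpl; auto. apply E_lt; auto. Qed.

Lemma fst_plus1 n x : fst (sk n (x + 1, 0)) = fst (sk n (x, 0)) + INR (ell ^ n).
Proof. induction n as [|n IH]; simpl. ring. rewrite IH, INR_IZR_INZ, E_sh.
  rewrite <- INR_IZR_INZ, mult_INR. ring. Qed.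

Lemma count_pre n z l : NoDup l -> (forall x, In x l -> preimage E tau n z x) ->
  (length l <= ell ^ n)%nat.
Proof. intros Hnd Hpre.
  set (F := fun x => fst (sk n (x, 0))).
  set (N := (ell ^ n)%nat).
  set (a0 := F 0 - fst z).
  set (c := (- Int_part (- a0))%Z).
  set (phi := fun zeta : R * R => Z.to_nat (up (F (fst zeta) - fst z) - 1 - c)).
  assert (Hk : forall zeta, In zeta l -> exists k, F (fst zeta) - fst z = IZR k /\ (c <= k < c + Z.of_nat N)%Z).
  { intros [x s] Hin. destruct (Hpre _ Hin) as [Hx [Hs [[k Hk] _]]]. simpl in Hx, Hs.
    rewrite iter_split_s in Hk. simpl in Hk.
    assert (Hk' : F x - fst z = IZR k) by exact Hk.
    exists k. simpl. split. auto.
    assert (HF0 : F 0 <= F x). { destruct (Req_dec 0 x) as [<-|hne]. lra. left; apply fst_mono; lra. }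
    assert (HF1 : F x < F 0 + INR N). { unfold N, F; rewrite <- fst_plus1. apply fst_mono; lra. }
    destruct (base_Int_part (- a0)) as [A1 A2].
    assert (H : IZR (c - 1) < IZR k) by (unfold c; rewrite minus_IZR, opp_IZR; unfold a0 in *; lra).
    assert (H0 : IZR k < IZR (c + Z.of_nat N)) by (unfold c; rewrite plus_IZR, opp_IZR, <- INR_IZR_INZ; unfold a0 in *; lra).
    apply lt_IZR in H. apply lt_IZR in H0. lia. }
  assert (Hinj : forall x y, In x l -> In y l -> phi x = phi y -> x = y).
  { intros [x s] [x' s'] Hx Hy Hp.
    destruct (Hk _ Hx) as [k [Ek Rk]]. destruct (Hk _ Hy) as [k' [Ek' Rk']].
    unfold phi in Hp. simpl in *. rewrite Ek, Ek', !up_IZR in Hp.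
    apply Z2Nat.inj in Hp; try lia.
    assert (k = k') by lia. subst k'.
    assert (Hxx : x = x').
    { destruct (Rtotal_order x x') as [h|[h|h]]; auto.
      - apply (fst_mono n) in h. fold (F x) (F x') in h. lra.
      - apply (fst_mono n) in h. fold (F x) (F x') in h. lra. }
    subst x'.
    destruct (Hpre _ Hx) as [_ [Hs [_ [k2 H2]]]]. destruct (Hpre _ Hy) as [_ [Hs' [_ [k2' H2']]]].
    rewrite iter_split_s in H2, H2'. simpl in *.
    assert (Hss : s - s' = IZR (k2 - k2')) by (rewrite minus_IZR; lra).
    assert (Hz0 : (k2 - k2' = 0)%Z) by (apply int_small; lra).
    rewrite Hz0 in Hss. simpl in Hss. f_equal. lra. }
  rewrite <- (length_map phi l). rewrite <- (length_seq N 0).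
  apply NoDup_incl_length. apply NoDup_map_in; auto.
  intros y Hy. apply in_map_iff in Hy. destruct Hy as [zeta [<- Hz]].
  apply in_seq. destruct (Hk _ Hz) as [k [Ek Rk]]. unfold phi. rewrite Ek, up_IZR. lia.
Qed.

Local Notation Nc Rc n := (Ncal E tau dE dtau lam Rc n).
Local Notation gp Rc n z v := (good_preimage E tau dE dtau lam Rc n z v).

Lemma good_count Rc n z v l : NoDup l -> (forall x, In x l -> gp Rc n z v x) ->
  (length l <= ell ^ n)%nat.
Proof. intros Hnd H. apply (count_pre n z); auto. intros x Hx; apply H; auto. Qed.

Lemma good_card Rc n z v : exists k, has_card (gp Rc n z v) k.
Proof. apply (finite_of_bound _ (ell ^ n)). intros l Hl HP. apply (good_count Rc n z v); auto. Qed.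

Lemma Nc_lub Rc n : is_lub (N_values E tau dE dtau lam Rc n) (Nc Rc n).
Proof. unfold Ncal. apply epsilon_spec.
  assert (HB : bound (N_values E tau dE dtau lam Rc n)).
  { exists (INR (ell ^ n)). intros y [z [v [k [_ [[l [Hnd [Hiff Hlen]]] ->]]]]].
    apply le_INR. rewrite <- Hlen. apply (good_count Rc n z v); auto. intros x Hx; apply Hiff; auto. }
  assert (HE : exists y, N_values E tau dE dtau lam Rc n y).
  { destruct (good_card Rc n (0,0) (1,0)) as [k Hk]. exists (INR k), (0,0), (1,0), k.
    simpl. split; [ring| auto]. }
  destruct (completeness _ HB HE) as [m Hm]. exists m; auto. Qed.

Lemma Nc_ge Rc n z v l : fst v * fst v + snd v * snd v = 1 -> NoDup l ->
  (forall x, In x l -> gp Rc n z v x) -> INR (length l) <= Nc Rc n.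
Proof. intros Hu Hnd H. destruct (good_card Rc n z v) as [k Hk].
  apply Rle_trans with (INR k). apply le_INR. apply (card_ge (gp Rc n z v) k l); auto.
  apply (proj1 (Nc_lub Rc n)). exists z, v, k. auto. Qed.

Lemma Nc_le Rc n B : (forall z v l, fst v * fst v + snd v * snd v = 1 -> NoDup l ->
  (forall x, In x l -> gp Rc n z v x) -> INR (length l) <= B) -> Nc Rc n <= B.
Proof. intros HB. apply (proj2 (Nc_lub Rc n)).
  intros y [z [v [k [Hu [[l [Hnd [Hiff Hlen]]] ->]]]]]. rewrite <- Hlen.
  apply (HB z v); auto. intros x Hx; apply Hiff; auto. Qed.

Lemma Nc_pow Rc n : Nc Rc n <= INR (ell ^ n).
Proof. apply Nc_le. intros z v l _ Hnd H. apply le_INR. apply (good_count Rc n z v); auto. Qed.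

Lemma Nc_ge1 Rc n : 0 <= Rc -> 1 <= Nc Rc n.
Proof. intros HR.
  destruct (D_form n (0,0)) as [a [c [Ha Hl]]].
  assert (Hap : 0 < a) by (pose proof (pow_lt lam n ltac:(lra)); lra).
  assert (Hq : 0 < a * a + c * c) by nra.
  set (s := sqrt (a * a + c * c)).
  assert (Hs : 0 < s) by (apply sqrt_lt_R0; auto).
  assert (Hss : s * s = a * a + c * c) by (apply sqrt_sqrt; lra).
  replace 1 with (INR (length ((0,0) :: nil))) by reflexivity.
  apply (Nc_ge Rc n (sk n (0,0)) (a / s, c / s)).
  - simpl. replace (a / s * (a / s) + c / s * (c / s)) with ((a * a + c * c) / (s * s)) by (field; lra).
    rewrite Hss. field. lra.
  - constructor. intros []. constructor.
  - intros x [<-|[]]. split.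
    + unfold preimage. simpl. repeat split; try lra; exists 0%Z; simpl; ring.
    + exists (/ s, 0). split.
      * unfold in_cone, theta. simpl. rewrite Rabs_R0. apply Rmult_le_pos; [|apply Rabs_pos].
        apply Rmult_le_pos; [lra| left; apply Rinv_0_lt_compat; lra].
      * rewrite Ha. unfold mat_app; simpl. f_equal; field; lra.
Qed.

Lemma Nc_mono Rc1 Rc2 n : Rc1 <= Rc2 -> Nc Rc1 n <= Nc Rc2 n.
Proof. intros H. apply Nc_le. intros z v l Hu Hnd Hg. apply (Nc_ge Rc2 n z v); auto.
  intros x Hx. destruct (Hg x Hx) as [Hp [w [Hw Hv]]]. split; auto. exists w; split; auto.
  apply cone_mono with Rc1; auto. Qed.

Lemma transfer Rc n m z zeta w : Mtau <= Rc -> preimage E tau (n + m) z zeta ->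
  in_cone lam Rc w ->
  preimage E tau n z (red (sk m zeta)) /\ preimage E tau m (red (sk m zeta)) zeta /\
  in_cone lam (Mtau + / lam ^ m * (Rc - Mtau)) (mat_app (D m zeta) w) /\
  mat_app (D (n + m) zeta) w = mat_app (D n (red (sk m zeta))) (mat_app (D m zeta) w).
Proof. intros HR Hpre Hw.
  set (y := red (sk m zeta)).
  destruct (red_decomp (sk m zeta)) as [j1 [j2 Hd]]. fold y in Hd.
  pose proof (red_range (sk m zeta)) as Hy. fold y in Hy.
  destruct Hpre as [Hz1 [Hz2 [[K1 HK1] [K2 HK2]]]].
  rewrite iter_add, Hd in HK1, HK2.
  destruct (iter_shift n y j1 j2) as [k1 [k2 Hsh]]. rewrite Hsh in HK1, HK2. simpl in HK1, HK2.
  split; [|split; [|split]].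
  - split; [tauto| split; [tauto|split]].
    + exists (K1 - k1)%Z. rewrite minus_IZR. lra.
    + exists (K2 - k2)%Z. rewrite minus_IZR. lra.
  - split; [auto| split; [auto|split]].
    + exists j1. rewrite Hd. simpl. ring.
    + exists j2. rewrite Hd. simpl. ring.
  - apply cone_iter; auto.
  - rewrite D_add, mat_app_mul, Hd, D_shift. reflexivity.
Qed.

Lemma submult n m Rc : Mtau <= Rc ->
  Nc Rc (n + m) <= Nc (Mtau + / lam ^ m * (Rc - Mtau)) n * Nc Rc m.
Proof. intros HR.
  assert (HN0 : 0 <= Nc Rc m) by (pose proof (Nc_ge1 Rc m ltac:(lra)); lra).
  apply Nc_le. intros z v l Hu Hnd Hgood.
  set (g := fun zeta => red (sk m zeta)).
  apply Rle_trans with (INR (length (nodup pdec (map g l))) * Nc Rc m).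
  - apply (fiber_count pdec g); auto.
    + intros y l' Hincl Hnd' Hfib.
      destruct l' as [|zeta0 l'']. simpl; lra.
      destruct (Hgood zeta0 (Hincl _ (or_introl eq_refl))) as [Hp0 [w0 [Hw0 Hv0]]].
      destruct (transfer Rc n m z zeta0 w0 HR Hp0 Hw0) as [_ [_ [_ Ht0]]].
      assert (Hg0 : g zeta0 = y) by (apply Hfib; left; auto).
      unfold g in Hg0. rewrite Hg0 in Ht0.
      set (u0 := mat_app (D m zeta0) w0) in *. clearbody u0.
      destruct (D_form n y) as [a [c [Ha Hl]]].
      assert (Hap : 0 < a) by (pose proof (pow_lt lam n ltac:(lra)); lra).
      assert (Hq : 0 < fst u0 * fst u0 + snd u0 * snd u0).
      { destruct (Req_dec (fst u0) 0) as [h1|h1]; [destruct (Req_dec (snd u0) 0) as [h2|h2]|]; try nra.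
        rewrite Ht0, Ha in Hv0. unfold mat_app in Hv0. rewrite h1, h2 in Hv0. rewrite <- Hv0 in Hu.
        simpl in Hu. lra. }
      set (s := sqrt (fst u0 * fst u0 + snd u0 * snd u0)).
      assert (Hs : 0 < s) by (apply sqrt_lt_R0; auto).
      assert (Hss : s * s = fst u0 * fst u0 + snd u0 * snd u0) by (apply sqrt_sqrt; lra).
      clearbody s.
      apply (Nc_ge Rc m y (/ s * fst u0, / s * snd u0)); auto.
      * simpl. replace (/ s * fst u0 * (/ s * fst u0) + / s * snd u0 * (/ s * snd u0))
          with ((fst u0 * fst u0 + snd u0 * snd u0) / (s * s)) by (field; lra).
        rewrite Hss. field. lra.
      * intros zeta Hz.
        destruct (Hgood zeta (Hincl _ Hz)) as [Hp [w [Hw Hv]]].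
        destruct (transfer Rc n m z zeta w HR Hp Hw) as [_ [Hpm [Hc Ht]]].
        assert (Hg : g zeta = y) by (apply Hfib; auto). unfold g in Hg. rewrite Hg in Ht, Hpm.
        assert (Hu0 : mat_app (D m zeta) w = u0).
        { rewrite Ha in Ht, Ht0. apply (mat_inj a c); auto. rewrite <- Ht, <- Ht0. congruence. }
        split; auto. exists (/ s * fst w, / s * snd w). split.
        apply cone_scale; auto.
        rewrite mat_app_scale, Hu0. reflexivity.
    + intros x Hx. apply nodup_In. apply in_map; auto.
  - apply Rmult_le_compat_r; auto. apply (Nc_ge _ n z v); auto. apply NoDup_nodup.
    intros y Hy. apply nodup_In in Hy. apply in_map_iff in Hy. destruct Hy as [zeta [<- Hz]].
    destruct (Hgood zeta Hz) as [Hp [w [Hw Hv]]].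
    destruct (transfer Rc n m z zeta w HR Hp Hw) as [Hpn [_ [Hc Ht]]].
    split; auto. exists (mat_app (D m zeta) w). split; auto. unfold g. rewrite <- Ht; auto.
Qed.

Lemma Rp_le Rc m : Mtau <= Rc -> Mtau + / lam ^ m * (Rc - Mtau) <= Rc.
Proof. intros H. assert (H1 : 1 <= lam ^ m) by (apply pow_R1_Rle; lra).
  assert (H2 : / lam ^ m <= 1) by (rewrite <- Rinv_1; apply Rinv_le_contravar; lra).
  assert (H3 : 0 <= / lam ^ m) by (left; apply Rinv_0_lt_compat; lra).
  assert (/ lam ^ m * (Rc - Mtau) <= 1 * (Rc - Mtau)) by (apply Rmult_le_compat_r; lra).
  lra. Qed.

Lemma Nc_nonneg Rc n : Mtau <= Rc -> 0 <= Nc Rc n.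
Proof. intros H. pose proof (Nc_ge1 Rc n ltac:(lra)). lra. Qed.

Lemma fek_R Rc0 : Mtau <= Rc0 -> exists L0,
  (forall n, (1 <= n)%nat -> L0 <= cc (fun n => Nc Rc0 n) n) /\
  Un_cv (fun k => cc (fun n => Nc Rc0 n) (S k)) L0.
Proof. intros H. apply (fekete _ (INR ell)).
  - intros n _. apply Nc_ge1. lra.
  - intros n _. rewrite <- pow_INR. apply Nc_pow.
  - intros n m _ _. eapply Rle_trans. apply submult; auto.
    apply Rmult_le_compat_r. apply Nc_nonneg; auto. apply Nc_mono. apply Rp_le; auto.
Qed.

Lemma bernoulli m : 1 + INR m * (lam - 1) <= lam ^ m.
Proof. induction m as [|m IH]. simpl; lra. rewrite S_INR. simpl.
  assert (0 <= INR m) by apply pos_INR.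
  assert (lam * (1 + INR m * (lam - 1)) <= lam * lam ^ m) by (apply Rmult_le_compat_l; lra).
  assert (0 <= INR m * ((lam - 1) * (lam - 1))) by (apply Rmult_le_pos; [lra| apply Rmult_le_pos; lra]).
  assert (E1 : lam * (1 + INR m * (lam - 1)) = 1 + (INR m + 1) * (lam - 1) + INR m * ((lam - 1) * (lam - 1))) by ring.
  lra. Qed.

Lemma compare R1 R2 L1 L2 : Mtau < R1 -> Mtau <= R2 ->
  (forall n, (1 <= n)%nat -> L2 <= cc (fun n => Nc R2 n) n) ->
  Un_cv (fun k => cc (fun n => Nc R1 n) (S k)) L1 -> L2 <= L1.
Proof. intros H1 H2 Hlow Hcv.
  set (q := (R2 - Mtau) / ((R1 - Mtau) * (lam - 1))).
  set (m := Z.to_nat (up q)).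
  assert (Hm : q <= INR m).
  { destruct (archimed q) as [Hup _]. unfold m.
    destruct (Z_le_gt_dec 0%Z (up q)) as [hz|hz].
    - rewrite INR_IZR_INZ, Z2Nat.id; auto. lra.
    - apply Rle_trans with 0. apply Rlt_le, Rlt_le_trans with (IZR (up q)); auto. apply IZR_le; lia.
      apply pos_INR. }
  assert (Hpm : 0 < lam ^ m) by (apply pow_lt; lra).
  assert (HRp : Mtau + / lam ^ m * (R2 - Mtau) <= R1).
  { pose proof (bernoulli m).
    assert (q * (lam - 1) <= INR m * (lam - 1)) by (apply Rmult_le_compat_r; lra).
    assert (Hq : q * (lam - 1) = (R2 - Mtau) / (R1 - Mtau)) by (unfold q; field; lra).
    assert (R2 - Mtau <= lam ^ m * (R1 - Mtau)).
    { assert ((R2 - Mtau) / (R1 - Mtau) <= lam ^ m) by lra.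
      apply Rmult_le_compat_r with (r := R1 - Mtau) in H3; [|lra].
      replace ((R2 - Mtau) / (R1 - Mtau) * (R1 - Mtau)) with (R2 - Mtau) in H3 by (field; lra).
      lra. }
    assert (/ lam ^ m * (R2 - Mtau) <= / lam ^ m * (lam ^ m * (R1 - Mtau)))
      by (apply Rmult_le_compat_l; [left; apply Rinv_0_lt_compat|]; lra).
    replace (/ lam ^ m * (lam ^ m * (R1 - Mtau))) with (R1 - Mtau) in H4 by (field; lra).
    lra. }
  set (C := INR ell).
  assert (HC : 1 <= C).
  { apply (C_ge1 (fun n => Nc R1 n)). intros; apply Nc_ge1; lra.
    intros n _. unfold C. rewrite <- pow_INR. apply Nc_pow. }
  assert (HlnC : 0 <= ln C) by (rewrite <- ln_1; apply ln_le'; lra).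
  apply (lim_le_aux (cc (fun n => Nc R1 n)) L1 L2 (INR m * ln C)); auto.
  apply Rmult_le_pos; auto. apply pos_INR.
  intros n Hn. eapply Rle_trans. apply (Hlow (n + m)%nat). lia.
  unfold cc, bb.
  assert (Ha1 : 1 <= Nc R1 n) by (apply Nc_ge1; lra).
  assert (Ha2 : 1 <= Nc R2 (n + m)) by (apply Nc_ge1; lra).
  assert (Hk : Nc R2 (n + m) <= Nc R1 n * C ^ m).
  { assert (HRp0 : Mtau <= Mtau + / lam ^ m * (R2 - Mtau)).
    { assert (0 <= / lam ^ m * (R2 - Mtau)) by (apply Rmult_le_pos; [left; apply Rinv_0_lt_compat; lra|lra]). lra. }
    eapply Rle_trans. apply submult; auto.
    apply Rmult_le_compat. apply Nc_nonneg; lra. apply Nc_nonneg; auto.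
    apply Nc_mono; auto. unfold C; rewrite <- pow_INR; apply Nc_pow. }
  assert (Hl : ln (Nc R2 (n + m)) <= ln (Nc R1 n) + INR m * ln C).
  { rewrite <- ln_pow by lra. rewrite <- ln_mult. apply ln_le'; lra. lra.
    apply pow_lt; lra. }
  assert (Hb1 : 0 <= ln (Nc R1 n)) by (rewrite <- ln_1; apply ln_le'; lra).
  assert (HK : 0 <= INR m * ln C) by (apply Rmult_le_pos; auto; apply pos_INR).
  assert (Hn0 : 0 < INR n) by (apply lt_0_INR; lia).
  assert (Hnm : INR n <= INR (n + m)) by (apply le_INR; lia).
  assert (Hinv : / INR (n + m) <= / INR n) by (apply Rinv_le_contravar; lra).
  assert (Hinv0 : 0 <= / INR (n + m)) by (left; apply Rinv_0_lt_compat; lra).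
  unfold Rdiv.
  apply Rle_trans with ((ln (Nc R1 n) + INR m * ln C) * / INR (n + m)).
  apply Rmult_le_compat_r; auto.
  apply Rle_trans with ((ln (Nc R1 n) + INR m * ln C) * / INR n).
  apply Rmult_le_compat_l; lra. lra.
Qed.

Lemma main_sec (Rc : R) (HRc : Mtau < Rc) :
  (forall n m : nat, (1 <= n)%nat -> (1 <= m)%nat ->
     Ncal E tau dE dtau lam Rc (n + m)
       <= Ncal E tau dE dtau lam (Mtau + / lam ^ m * (Rc - Mtau)) n
          * Ncal E tau dE dtau lam Rc m
     /\ Ncal E tau dE dtau lam (Mtau + / lam ^ m * (Rc - Mtau)) n
          * Ncal E tau dE dtau lam Rc m
        <= Ncal E tau dE dtau lam Rc n * Ncal E tau dE dtau lam Rc m)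
  /\
  exists L : R,
    Un_cv (fun k => Rpower (Ncal E tau dE dtau lam Rc (S k)) (/ INR (S k))) L
    /\ is_glb (fun y => exists k : nat,
                 y = Rpower (Ncal E tau dE dtau lam Rc (S k)) (/ INR (S k))) L
    /\ (forall Rc' : R, Mtau < Rc' ->
          Un_cv (fun k => Rpower (Ncal E tau dE dtau lam Rc' (S k)) (/ INR (S k))) L).
Proof.
  assert (Hrp : forall R0 k, Rpower (Nc R0 (S k)) (/ INR (S k)) = exp (cc (fun n => Nc R0 n) (S k))).
  { intros. unfold Rpower, cc, bb, Rdiv. rewrite Rmult_comm. reflexivity. }
  assert (Hexp : forall R0 L0, Un_cv (fun k => cc (fun n => Nc R0 n) (S k)) L0 ->
     Un_cv (fun k => Rpower (Nc R0 (S k)) (/ INR (S k))) (exp L0)).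
  { intros R0 L0 H. apply Un_cv_ext with (fun k => exp (cc (fun n => Nc R0 n) (S k))).
    intros; rewrite Hrp; auto. apply continuity_seq; auto.
    apply derivable_continuous_pt, derivable_pt_exp. }
  split.
  - intros n m Hn Hm. split. apply submult; lra.
    apply Rmult_le_compat_r. apply Nc_nonneg; lra. apply Nc_mono. apply Rp_le; lra.
  - destruct (fek_R Rc ltac:(lra)) as [L0 [Hlow Hcv]].
    exists (exp L0). split; [|split].
    + apply Hexp; auto.
    + split.
      * intros y [k ->]. rewrite Hrp. pose proof (Hlow (S k) ltac:(lia)).
        destruct (Rle_lt_or_eq_dec _ _ H) as [h|h]. left; apply exp_increasing; auto. rewrite h; lra.
      * intros b Hb. destruct (Rle_or_lt b (exp L0)) as [h|h]; auto. exfalso.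
        destruct (Hexp Rc L0 Hcv (b - exp L0) ltac:(lra)) as [N HN].
        specialize (HN N (le_n _)). unfold R_dist in HN.
        pose proof (Rle_abs (Rpower (Nc Rc (S N)) (/ INR (S N)) - exp L0)).
        assert (b <= Rpower (Nc Rc (S N)) (/ INR (S N))) by (apply Hb; exists N; auto).
        lra.
    + intros Rc' HRc'. destruct (fek_R Rc' ltac:(lra)) as [L0' [Hlow' Hcv']].
      assert (L0' <= L0) by (apply (compare Rc Rc'); auto; lra).
      assert (L0 <= L0') by (apply (compare Rc' Rc); auto; lra).
      replace L0 with L0' by lra. apply Hexp; auto.
Qed.

End Geo.

Theorem mainTheorem2
  (r : nat) (Hr : (2 <= r)%nat)
  (ell : nat) (Hell : (2 <= ell)%nat)
  (E dE : R -> R) (lam Lam : R)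
  (HE_Cr : Cr r E)
  (HE_lift : forall x, E (x + 1) = E x + INR ell)
  (HdE : forall x, derivable_pt_lim E x (dE x))
  (Hlam : 1 < lam)
  (HdE_bnd : forall x, lam <= dE x <= Lam)
  (tau dtau : R -> R)
  (Htau_Cr : Cr r tau)
  (Htau_per : forall x, tau (x + 1) = tau x)
  (Hdtau : forall x, derivable_pt_lim tau x (dtau x))
  (Mtau : R) (HMtau : is_lub (fun y => exists x, y = Rabs (dtau x)) Mtau)
  (Rc : R) (HRc : Mtau < Rc) :
  (forall n m : nat, (1 <= n)%nat -> (1 <= m)%nat ->
     Ncal E tau dE dtau lam Rc (n + m)
       <= Ncal E tau dE dtau lam (Mtau + / lam ^ m * (Rc - Mtau)) n
          * Ncal E tau dE dtau lam Rc m
     /\ Ncal E tau dE dtau lam (Mtau + / lam ^ m * (Rc - Mtau)) n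
          * Ncal E tau dE dtau lam Rc m
        <= Ncal E tau dE dtau lam Rc n * Ncal E tau dE dtau lam Rc m)
  /\
  exists L : R,
    Un_cv (fun k => Rpower (Ncal E tau dE dtau lam Rc (S k)) (/ INR (S k))) L
    /\ is_glb (fun y => exists k : nat,
                 y = Rpower (Ncal E tau dE dtau lam Rc (S k)) (/ INR (S k))) L
    /\ (forall Rc' : R, Mtau < Rc' ->
          Un_cv (fun k => Rpower (Ncal E tau dE dtau lam Rc' (S k)) (/ INR (S k))) L).
Proof.
Proof.
  assert (HdtauM : forall x, Rabs (dtau x) <= Mtau) by (intro x; apply (proj1 HMtau); exists x; auto).
  assert (HM0 : 0 <= Mtau) by (pose proof (HdtauM 0); pose proof (Rabs_pos (dtau 0)); lra).
  assert (HdE_low : forall x, lam <= dE x) by (intro x; apply HdE_bnd).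
  eapply main_sec; eauto.
Qed.
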